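(* Let $G$ be a finite trivially power-colorable graph with $k=\chi(G)$, let $\lambda$ be an infinite cardinal, and let $\Phi$ be a proper $k$-coloring of $G^\lambda$. Then there exist an ultrafilter $\mathcal U$ on $\lambda$ and a proper $k$-coloring $\phi$ of $G$ such that $\Phi=\phi^{\mathcal U}$.
   Context: Graphs are simple and undirected; a $k$-coloring is a proper coloring with colors in $\{0,\dots,k-1\}$. For graphs $(G_i)_{i\in I}$, the product $\times_{i\in I}G_i$ has vertex set $\times_{i\in I}V(G_i)$, with $(u_i)$ adjacent to $(v_i)$ iff $u_iv_i\in E(G_i)$ for all $i$; $G^I$ is the product of copies of $G$ indexed by $I$, and $G^n=G^{\{1,\dots,n\}}$. A coloring $\Phi$ of a product is trivial if there exist an index $i^*$ and a proper coloring $\phi$ of $G_{i^*}$ with $\Phi(v)=\phi(v_{i^*})$ for all $v$. $G$ is trivially power-colorable if for every positive integer $n$, every $\chi(G)$-coloring of $G^n$ is trivial. For an ultrafilter $\mathcal U$ on $\lambda$ and $\mathbf v=(v_\alpha)_{\alpha<\lambda}\in V(G^\lambda)$, $\mathbf v_{\mathcal U}$ is the unique $x\in V(G)$ with $\{\alpha<\lambda:v_\alpha=x\}\in\mathcal U$, and $\phi^{\mathcal U}(\mathbf v)=\phi(\mathbf v_{\mathcal U})$. *)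

(* Defs.v *)
From HB Require Import structures.
From mathcomp Require Import all_boot.
From mathcomp Require Import boolp classical_sets cardinality filter.

Set Implicit Arguments. Unset Strict Implicit. Unset Printing Implicit Defensive.

Definition simple_graph (T : Type) (e : rel T) : Prop :=
  symmetric e /\ irreflexive e.

Definition proper_coloring (V : Type) (adj : V -> V -> Prop) (k : nat)
  (c : V -> 'I_k) : Prop :=
  forall u v, adj u v -> c u <> c v.

Definition colorable (V : Type) (adj : V -> V -> Prop) (k : nat) : Prop :=
  exists c : V -> 'I_k, proper_coloring adj c.

Definition is_chromatic_number (V : Type) (adj : V -> V -> Prop) (k : nat) :=
  colorable adj k /\ forall m, m < k -> ~ colorable adj m.

Definition pow_adj (T : Type) (e : rel T) (I : Type) (u v : I -> T) : Prop :=
  forall i, e (u i) (v i).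

Definition trivial_coloring (T : Type) (e : rel T) (I : Type) (k : nat)
  (Phi : (I -> T) -> 'I_k) : Prop :=
  exists (i : I) (phi : T -> 'I_k),
    proper_coloring (fun x y => e x y) phi /\ forall v, Phi v = phi (v i).

Definition trivially_power_colorable (T : Type) (e : rel T) : Prop :=
  forall chi, is_chromatic_number (fun x y => e x y) chi ->
  forall n, 0 < n ->
  forall Phi : ('I_n -> T) -> 'I_chi,
    proper_coloring (@pow_adj T e 'I_n) Phi -> trivial_coloring e Phi.

(* v_U = x : the set {a | v a = x} belongs to the ultrafilter U. *)
Definition ulim_is (I T : Type) (U : set_system I) (v : I -> T) (x : T) : Prop :=
  U (fun a : I => v a = x).

(* Main.v *)
Require Import Defs.
From mathcomp Require Import all_boot.
From mathcomp Require Import boolp classical_sets cardinality filter.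

Set Implicit Arguments. Unset Strict Implicit. Unset Printing Implicit Defensive.
Local Open Scope classical_set_scope.

Section Aux.
Variables (T : finType) (e : rel T) (k : nat) (I : Type) (Phi : (I -> T) -> 'I_k).
Hypothesis Htpc : trivially_power_colorable e.
Hypothesis Hchi : is_chromatic_number (fun x y => e x y) k.
Hypothesis Hprop : proper_coloring (@pow_adj T e I) Phi.
Variable i0 : I.
Variables a b : T.
Hypothesis eab : e a b.

Definition phi0 (t : T) := Phi (fun _ => t).
Definition PP (J : finType) (v : I -> J) (j : J) :=
  forall x : J -> T, Phi (x \o v) = phi0 (x j).

Lemma P_ex (J : finType) (v : I -> J) : exists j, PP v j.
Proof.
have n0 : 0 < #|J| by apply/card_gt0P; exists (v i0).
pose Psi (y : 'I_#|J| -> T) := Phi (fun i => y (enum_rank (v i))).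
have HP : proper_coloring (@pow_adj T e 'I_#|J|) Psi.
  by move=> y y' Hyy'; apply: Hprop => i; exact: Hyy'.
have [m [psi [_ Hpsi]]] := Htpc Hchi n0 HP.
have E : forall x : J -> T, Phi (x \o v) = psi (x (enum_val m)).
  move=> x'; rewrite -(Hpsi (x' \o enum_val)) /Psi /=.
  by congr Phi; apply: funext => i /=; rewrite enum_rankK.
exists (enum_val m) => x; rewrite E /phi0.
symmetry; exact: (E (fun _ => x (enum_val m))).
Qed.

Lemma P_unique (J : finType) (v : I -> J) j1 j2 : PP v j1 -> PP v j2 -> j1 = j2.
Proof.
move=> H1 H2; case: (eqVneq j1 j2) => // ne.
pose x j := if j == j1 then a else b.
have ne' : j2 != j1 by rewrite eq_sym.
have := H1 x; rewrite H2 /x eqxx (negbTE ne') => E; exfalso; by apply: (Hprop (u := fun _ => a) (v := fun _ => b)).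
Qed.

Lemma P_map (J J' : finType) (f : J -> J') (v : I -> J) j :
  PP v j -> PP (f \o v) (f j).
Proof. by move=> H x; exact: (H (x \o f)). Qed.

Lemma P_const (J : finType) (j : J) : PP (fun _ : I => j) j.
Proof. by move=> x. Qed.

Definition ind (A : set I) := fun i => `[< A i >].
Definition UU (A : set I) := PP (ind A) true.

Lemma UU_ultra : UltraFilter UU.
Proof.
have U0 : ~ UU set0.
  move=> H; have E : ind set0 = fun _ => false.
    by apply: funext => i; apply: asboolF.
  rewrite /UU E in H; have := P_unique H (P_const false) => //.
have Fil : Filter UU.
  split.
  - have E : ind setT = fun _ => true.
      by apply: funext => i; apply: asboolT.
    by rewrite /UU E; apply: P_const.
  - move=> A B HA HB.
    have [[p q] Hpq] := P_ex (fun i => (ind A i, ind B i)).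
    have := P_map fst Hpq => /(P_unique HA) /= Ep.
    have := P_map snd Hpq => /(P_unique HB) /= Eq.
    have := P_map (fun pq : bool * bool => pq.1 && pq.2) Hpq.
    rewrite /= -Ep -Eq /UU.
    have -> // : ind (A `&` B) = fun i => ind A i && ind B i.
    by apply: funext => i; rewrite /ind asbool_and.
  - move=> A B sAB HA.
    have [[p q] Hpq] := P_ex (fun i => (ind A i, ind B i)).
    have := P_map fst Hpq => /(P_unique HA) /= Ep.
    have := P_map (fun pq : bool * bool => pq.1 || pq.2) Hpq.
    rewrite /= -Ep /UU => H.
    suff -> : ind B = (fun pq : bool * bool => pq.1 || pq.2) \o (fun i => (ind A i, ind B i)) by [].
    apply: funext => i; rewrite /ind /=.
    case: (asboolP (A i)) => //= Ai; rewrite asboolT //; exact: sAB.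
have PF : ProperFilter UU by constructor.
split => // G PG sUG.
apply: funext => A; apply: propext; split; last exact: sUG.
move=> GA; have [c Hc] := P_ex (ind A).
case: c Hc => // Hc; exfalso.
have := P_map negb Hc => /= HnA.
have UnA : UU (~` A).
  rewrite /UU.
  have -> // : ind (~` A) = negb \o ind A.
  by apply: funext => i; rewrite /ind /= asbool_neg.
have := filterI GA (sUG _ UnA); rewrite setICr.
move=> H; exact: (@filter_not_empty _ G PG (H _)).
Qed.

Lemma UU_main (v : I -> T) (x : T) : ulim_is UU v x -> Phi v = phi0 x.
Proof.
move=> H; have [t Ht] := P_ex v.
have := P_map (fun s => s == x) Ht => /=.
have -> : (fun s => s == x) \o v = ind (fun i => v i = x).
  apply: funext => i; rewrite /ind /=.
  by case: (asboolP (v i = x)) => [->|/eqP /negbTE]; rewrite ?eqxx.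
move=> /(P_unique H) /esym /eqP <-.
exact: (Ht id).
Qed.

End Aux.

Theorem mainTheorem15 (T : finType) (e : rel T) (k : nat) (I : Type)
  (Phi : (I -> T) -> 'I_k) :
  simple_graph e ->
  trivially_power_colorable e ->
  is_chromatic_number (fun x y => e x y) k ->
  infinite_set [set: I] ->
  proper_coloring (@pow_adj T e I) Phi ->
  exists (U : set_system I) (phi : T -> 'I_k),
    UltraFilter U /\ proper_coloring (fun x y => e x y) phi /\
    forall (v : I -> T) (x : T), ulim_is U v x -> Phi v = phi x.
Proof.
move=> _ Htpc Hchi Hinf Hprop.
have [i0 _] := infinite_setN0 Hinf.
case: (pselect (exists a b, e a b)) => [[a [b eab]]|noe].
  exists (UU Phi), (phi0 Phi); split; first exact: (UU_ultra Htpc Hchi Hprop i0 eab).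
  split; last exact: (UU_main Htpc Hchi Hprop i0 eab).
  move=> x y exy; exact: (Hprop (fun _ => x) (fun _ => y) (fun _ => exy)).
have k1 : k <= 1.
  rewrite leqNgt; apply/negP => k1; case: Hchi => _ /(_ 1 k1); apply.
  exists (fun _ => ord0) => u v euv; exfalso; apply: noe; by exists u, v.
exists (principal_filter i0), (fun t => Phi (fun _ => t)); split.
  exact: principal_filter_ultra.
split; first by move=> u v euv; exfalso; apply: noe; exists u, v.
move=> v x _; apply: val_inj.
have Z : forall o : 'I_k, val o = 0.
  move=> o; apply/eqP; rewrite -leqn0 -ltnS; exact: leq_trans (ltn_ord o) k1.
exact: (etrans (Z _) (esym (Z _))).
Qed.
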